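(* Let $\mathscr V\subset\mathbb{R}_{\max}^n$ be a max-plus cone with full support. If $\mathscr V$ is contained in a half-space $\mathscr H$, then there exists a half-space $\mathscr H'$ such that $\mathscr V\subset\mathscr H'\subset\mathscr H$ and $\mathscr H'$ is minimal for inclusion among half-spaces containing $\mathscr V$ (i.e. there is no half-space $\mathscr H''$ with $\mathscr V\subset\mathscr H''\subsetneq\mathscr H'$).
   Context: $\mathbb{R}_{\max}=\mathbb{R}\cup\{-\infty\}$ with $a\oplus b=\max(a,b)$, $ab=a+b$. A max-plus cone is a set $\mathscr V\subset\mathbb{R}_{\max}^n$ with $\lambda u\oplus\mu v\in\mathscr V$ for all $u,v\in\mathscr V$, $\lambda,\mu\in\mathbb{R}_{\max}$ (entrywise operations). A half-space of $\mathbb{R}_{\max}^n$ is a set $\{x:\bigoplus_{i=1}^n a_ix_i\le\bigoplus_{j=1}^n b_jx_j\}$ with $a,b\in\mathbb{R}_{\max}^n$. $\mathscr V$ has full support if for every $k\in\{1,\dots,n\}$ some $v\in\mathscr V$ has $v_k\neq-\infty$. *)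

(* Defs.v *)
From mathcomp Require Import all_boot all_order all_algebra.
From mathcomp Require Import reals.
Set Implicit Arguments. Unset Strict Implicit. Unset Printing Implicit Defensive.
Import Order.TTheory GRing.Theory Num.Theory.
Local Open Scope ring_scope.

(* R_max = R ∪ {-oo}; None encodes -oo. *)
Definition rmax (R : realType) := option R.

Definition madd (R : realType) (a b : rmax R) : rmax R :=
  match a, b with
  | None, _ => b
  | _, None => a
  | Some x, Some y => Some (Num.max x y)
  end.

Definition mmul (R : realType) (a b : rmax R) : rmax R :=
  match a, b with
  | Some x, Some y => Some (x + y)
  | _, _ => None
  end.

Definition mle (R : realType) (a b : rmax R) : Prop :=
  match a, b with
  | None, _ => True
  | Some _, None => False
  | Some x, Some y => x <= y
  end.

Definition mvec (R : realType) (n : nat) := 'I_n -> rmax R.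

Definition mdot (R : realType) (n : nat) (a x : mvec R n) : rmax R :=
  \big[@madd R/None]_(i < n) mmul (a i) (x i).

Definition mp_cone (R : realType) (n : nat) (V : mvec R n -> Prop) : Prop :=
  forall u v : mvec R n, V u -> V v -> forall lam mu : rmax R,
    V (fun i => madd (mmul lam (u i)) (mmul mu (v i))).

Definition full_support (R : realType) (n : nat) (V : mvec R n -> Prop) : Prop :=
  forall k : 'I_n, exists v, V v /\ v k <> None.

Definition halfspace (R : realType) (n : nat) (a b : mvec R n) : mvec R n -> Prop :=
  fun x => mle (mdot a x) (mdot b x).

Definition msubset (R : realType) (n : nat) (A B : mvec R n -> Prop) : Prop :=
  forall x, A x -> B x.

(* Main.v *)
Require Import Defs.
From mathcomp Require Import all_boot all_order all_algebra.
From mathcomp Require Import reals.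
From mathcomp Require Import classical_sets boolp.
Set Implicit Arguments. Unset Strict Implicit. Unset Printing Implicit Defensive.
Import Order.TTheory GRing.Theory Num.Theory.
Local Open Scope ring_scope.

Section Basics.
Variable R : realType.
Implicit Types p q z x y : rmax R.

Lemma mle_refl p : mle p p.
Proof. by case: p => //= x. Qed.

Lemma mle_trans p q z : mle p q -> mle q z -> mle p z.
Proof. by case: p => [x|] //; case: q => [y|] //; case: z => [w|] //= ; apply: le_trans. Qed.

Lemma mle_total p q : mle p q \/ mle q p.
Proof. case: p => [x|]; case: q => [y|] /=; auto. by case/orP: (le_total x y); auto. Qed.

Lemma mleN p : mle p None -> p = None.
Proof. by case: p. Qed.

Lemma mle_madd p q z : mle (madd p q) z <-> mle p z /\ mle q z.
Proof.
case: p => [x|]; case: q => [y|] /=; try tauto.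
case: z => [w|] /=; last tauto. by rewrite ge_max; split => [/andP[]|[-> ->]].
Qed.

Lemma madd_cases p q : madd p q = p \/ madd p q = q.
Proof.
case: p => [x|]; case: q => [y|] /=; auto.
by rewrite /Num.max; case: ifP; auto.
Qed.

Lemma mle_antisym p q : mle p q -> mle q p -> p = q.
Proof.
case: p => [x|]; case: q => [y|] //= h1 h2. by rewrite (@le_anti _ _ x y) // h1 h2.
Qed.

Lemma mmul_monol p q x : mle p q -> mle (mmul p x) (mmul q x).
Proof. case: p => [a|]; case: q => [b|]; case: x => [c|] //= h. by rewrite lerD2r. Qed.

Lemma mmul_monor p q x : mle p q -> mle (mmul x p) (mmul x q).
Proof. case: p => [a|]; case: q => [b|]; case: x => [c|] //= h. by rewrite lerD2l. Qed.

Variable n : nat.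
Implicit Types a b c d u v w : mvec R n.

Lemma big_le (r : seq 'I_n) (F : 'I_n -> rmax R) z :
  mle (\big[@madd R/None]_(i <- r) F i) z <-> forall i, i \in r -> mle (F i) z.
Proof.
elim: r => [|i r IH]; first by rewrite big_nil; split.
rewrite big_cons mle_madd IH; split.
  by move=> [h1 h2] j; rewrite in_cons => /orP[/eqP->|]; auto.
move=> h; split; first by apply: h; rewrite mem_head.
by move=> j hj; apply: h; rewrite in_cons hj orbT.
Qed.

Lemma big_arg (r : seq 'I_n) (F : 'I_n -> rmax R) :
  \big[@madd R/None]_(i <- r) F i = None \/
  exists2 m, m \in r & \big[@madd R/None]_(i <- r) F i = F m.
Proof.
elim: r => [|i r IH]; first by rewrite big_nil; left.
rewrite big_cons; case: (madd_cases (F i) (\big[@madd R/None]_(j <- r) F j)) => ->.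
  by right; exists i => //; rewrite mem_head.
case: IH => [->|[m hm ->]]; first by left.
by right; exists m => //; rewrite in_cons hm orbT.
Qed.

Lemma mdot_le a (x : mvec R n) z : mle (mdot a x) z <-> forall i, mle (mmul (a i) (x i)) z.
Proof.
rewrite /mdot big_le; split => h i; first by apply: h; rewrite mem_index_enum.
by move=> _; apply: h.
Qed.

Lemma mdot_arg a (x : mvec R n) : mdot a x = None \/ exists m, mdot a x = mmul (a m) (x m).
Proof.
rewrite /mdot; case: (big_arg (index_enum 'I_n) (fun i => mmul (a i) (x i))); auto.
by move=> [m _ ->]; right; exists m.
Qed.

Lemma mdot_ge a (x : mvec R n) i : mle (mmul (a i) (x i)) (mdot a x).
Proof. by move: (mle_refl (mdot a x)); rewrite mdot_le. Qed.

Lemma mdot_monol a b (x : mvec R n) : (forall i, mle (a i) (b i)) -> mle (mdot a x) (mdot b x).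
Proof.
move=> h; apply/mdot_le => i; apply: mle_trans (mdot_ge b x i).
exact: mmul_monol.
Qed.

Lemma mle_mdot z a (x : mvec R n) : mle z (mdot a x) <-> z = None \/ exists i, mle z (mmul (a i) (x i)).
Proof.
split.
  case: (mdot_arg a x) => [->|[m ->]] h; first by left; apply: mleN.
  by right; exists m.
case=> [->|[i h]] //; exact: mle_trans h (mdot_ge a x i).
Qed.

End Basics.

Section Two.
Variable R : realType.
Variable n : nat.
Implicit Types a b c d f g : mvec R n.

Lemma mmulN (p : rmax R) : mmul p None = None.
Proof. by case: p. Qed.

Lemma madd_ge_l (p q : rmax R) : mle p (madd p q).
Proof. by have /mle_madd [] := mle_refl (madd p q). Qed.

Lemma madd_ge_r (p q : rmax R) : mle q (madd p q).
Proof. by have /mle_madd [] := mle_refl (madd p q). Qed.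

Lemma le_eq (p q : rmax R) : (forall z, mle p z <-> mle q z) -> p = q.
Proof.
move=> h; apply: mle_antisym; first by apply/h; apply: mle_refl.
by apply/h; apply: mle_refl.
Qed.

Definition upd f (k : 'I_n) (t : rmax R) : mvec R n :=
  fun i => if i == k then t else f i.

Lemma upd_upd f k t t' : upd (upd f k t) k t' = upd f k t'.
Proof. by apply: funext => i; rewrite /upd; case: (i == k). Qed.

Lemma mdot_upd a (x : mvec R n) j t :
  mdot (upd a j t) x = madd (mmul t (x j)) (mdot (upd a j None) x).
Proof.
apply: le_eq => z; rewrite mle_madd !mdot_le; split.
  move=> h; split; first by move: (h j); rewrite /upd eqxx.
  by move=> i; move: (h i); rewrite /upd; case: (i == j) => //.
move=> [h1 h2] i; move: (h2 i); rewrite /upd; case: eqP => [->|] //.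
Qed.

Lemma hs_mono a a' b b' : (forall i, mle (a i) (a' i)) -> (forall i, mle (b' i) (b i)) ->
  forall x, halfspace a' b' x -> halfspace a b x.
Proof.
move=> ha hb x h; apply: mle_trans (mdot_monol x ha) _.
exact: mle_trans h (mdot_monol x hb).
Qed.

Definition mleb (p q : rmax R) : bool :=
  match p, q with None, _ => true | Some _, None => false | Some x, Some y => x <= y end.

Lemma mlebE p q : mleb p q = true <-> mle p q.
Proof. by case: p => [x|]; case: q => [y|]. Qed.

Lemma mle_notmul (p q x : rmax R) : ~ mle p q -> mle (mmul p x) (mmul q x) -> mmul q x = None.
Proof.
case: p => [u|]; case: q => [w|]; case: x => [y|] //= h1 h2.
by exfalso; apply: h1; move: h2; rewrite lerD2r.
Qed.

Definition nA a b : mvec R n := fun i => if mleb (a i) (b i) then None else a i.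
Definition nB a b : mvec R n := fun i => if mleb (a i) (b i) then b i else None.

Lemma nAB_disj a b k : nA a b k = None \/ nB a b k = None.
Proof. by rewrite /nA /nB; case: mleb; auto. Qed.

Lemma norm_hs a b x : halfspace (nA a b) (nB a b) x <-> halfspace a b x.
Proof.
rewrite /halfspace; split.
  move=> h; apply/mdot_le => i.
  case e: (mleb (a i) (b i)).
    apply: mle_trans (mdot_ge b x i); apply: mmul_monol; exact/mlebE.
  have h1 : mle (mmul (nA a b i) (x i)) (mdot (nA a b) x) by apply: mdot_ge.
  rewrite /nA e in h1; apply: mle_trans h1 _; apply: mle_trans h _.
  apply: mdot_monol => m; rewrite /nB; case: mleb => //; exact: mle_refl.
move=> h; apply/mdot_le => i; rewrite /nA.
case e: (mleb (a i) (b i)) => //.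
have hi : mle (mmul (a i) (x i)) (mdot b x) := mle_trans (mdot_ge a x i) h.
case: (mdot_arg b x) => [E|[m E]].
  by rewrite E in hi; rewrite (mleN hi).
case em: (mleb (a m) (b m)).
  apply: mle_trans hi _; rewrite E.
  by have := mdot_ge (nB a b) x m; rewrite /nB em.
have hm : mle (mmul (a m) (x m)) (mmul (b m) (x m)).
  by rewrite -E; apply: mle_trans (mdot_ge a x m) h.
have E2 : mmul (b m) (x m) = None.
  by apply: (mle_notmul _ hm) => /mlebE; rewrite em.
by rewrite E E2 in hi; rewrite (mleN hi).
Qed.

Definition sc (l : R) f : mvec R n := fun i => mmul (Some l) (f i).

Lemma mmulA (l : R) (p x : rmax R) : mmul (mmul (Some l) p) x = mmul (Some l) (mmul p x).
Proof. by case: p => [u|]; case: x => [y|] //=; rewrite addrA. Qed.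

Lemma mle_sc (l : R) (p q : rmax R) : mle (mmul (Some l) p) (mmul (Some l) q) <-> mle p q.
Proof. by case: p => [u|]; case: q => [w|] //=; rewrite lerD2l. Qed.

Lemma mdot_sc l a (x : mvec R n) : mdot (sc l a) x = mmul (Some l) (mdot a x).
Proof.
apply: mle_antisym.
  apply/mdot_le => i; rewrite /sc mmulA mle_sc; exact: mdot_ge.
case: (mdot_arg a x) => [->|[m ->]] //.
by rewrite -mmulA; exact: (mdot_ge (sc l a) x m).
Qed.

Lemma hs_sc l c d x : halfspace (sc l c) (sc l d) x <-> halfspace c d x.
Proof. by rewrite /halfspace !mdot_sc mle_sc. Qed.

End Two.

Section Three.
Variable R : realType.
Variable n : nat.
Implicit Types a b c d f g : mvec R n.

Lemma iterate (P : mvec R n -> Prop) (rel : rmax R -> rmax R -> Prop) (Q : 'I_n -> Prop)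
  (rrefl : forall p, rel p p) (rtrans : forall p q r, rel p q -> rel q r -> rel p r)
  (Pmono : forall f g, (forall i, rel (g i) (f i)) -> P g -> P f)
  (step : forall f j, Q j -> P f -> exists t, [/\ rel t (f j), P (upd f j t) &
                             forall t', P (upd f j t') -> rel t t']) :
  forall f, P f -> exists g, [/\ forall i, rel (g i) (f i), forall i, ~ Q i -> g i = f i, P g &
     forall j, Q j -> forall t', P (upd g j t') -> rel (g j) t'].
Proof.
move=> f Pf.
suff: forall m, exists g, [/\ forall i, rel (g i) (f i), forall i, ~ Q i -> g i = f i, P g &
     forall j : 'I_n, (j < m)%N -> Q j -> forall t', P (upd g j t') -> rel (g j) t'].
  move=> /(_ n) [g [h1 h2 h3 h4]]; exists g; split => // j; exact: h4.
elim=> [|m [g [h1 h2 h3 h4]]]; first by exists f; split => //.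
case: (ltnP m n) => hmn; last first.
  exists g; split => // j hj; apply: h4; exact: (leq_trans (ltn_ord j) hmn).
set j0 := Ordinal hmn.
case: (pselect (Q j0)) => hq; last first.
  exists g; split => // j hj hQ; apply: h4 => //.
  rewrite ltnS leq_eqVlt in hj; case/orP: hj => // /eqP ej.
  by exfalso; apply: hq; have -> : j0 = j by apply: val_inj.
have [t [ht1 ht2 ht3]] := step g j0 hq h3.
exists (upd g j0 t); split => //.
- move=> i; rewrite /upd; case: eqP => [->|_] //; exact: rtrans ht1 (h1 j0).
- move=> i hi; rewrite /upd; case: eqP => [e|_]; last exact: h2.
  by exfalso; apply: hi; rewrite e.
- move=> j hj hQ t'; case: (eqVneq j j0) => [->|ne].
    by rewrite upd_upd /upd eqxx; exact: ht3.
  have hjm : (j < m)%N.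
    rewrite ltnS leq_eqVlt in hj; case/orP: hj => // /eqP ej.
    by exfalso; move/eqP: ne; apply; apply: val_inj.
  move=> hP; rewrite /upd (negbTE ne).
  apply: h4 => //; apply: Pmono hP => i; rewrite /upd.
  case: (i == j) => //; case: eqP => [->|_] //.
Qed.

End Three.
Local Open Scope classical_set_scope.

Section Four.
Variable R : realType.
Variable n : nat.
Implicit Types a b c d f g : mvec R n.
Variable V : mvec R n -> Prop.

Definition feas a b := forall v, V v -> halfspace a b v.

Lemma hs_upd_a a b k t (v : mvec R n) : halfspace (upd a k t) b v <->
  mle (mmul t (v k)) (mdot b v) /\ forall i, i != k -> mle (mmul (a i) (v i)) (mdot b v).
Proof.
rewrite /halfspace mdot_le; split.
  move=> h; split; first by move: (h k); rewrite /upd eqxx.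
  by move=> i ne; move: (h i); rewrite /upd (negbTE ne).
by move=> [h1 h2] i; rewrite /upd; case: eqP => [->|/eqP ne] //; exact: h2.
Qed.

Lemma step_a (hsupp : full_support V) a b k : feas a b ->
  exists t, [/\ mle (a k) t, feas (upd a k t) b & forall t', feas (upd a k t') b -> mle t' t].
Proof.
move=> hf.
have hrest : forall v, V v -> forall i, mle (mmul (a i) (v i)) (mdot b v).
  by move=> v Vv i; apply: mle_trans (mdot_ge a v i) (hf v Vv).
have feasE : forall t, feas (upd a k t) b <-> forall v, V v -> mle (mmul t (v k)) (mdot b v).
  move=> t; split => h v Vv.
    by have /hs_upd_a [] := h v Vv.
  by apply/hs_upd_a; split; [exact: h | move=> i _; exact: hrest].
set F := fun s : R => forall v, V v -> mle (mmul (Some s) (v k)) (mdot b v).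
have hak : forall v, V v -> mle (mmul (a k) (v k)) (mdot b v) by move=> v Vv; exact: hrest.
case: (pselect (exists s, F s)) => [[s0 Fs0]|nF].
  have [v [Vv vk]] := hsupp k.
  case ev: (v k) vk => [nu|] // _.
  case eb: (mdot b v) => [beta|]; last by move: (Fs0 v Vv); rewrite ev eb.
  have ub : forall s, F s -> s <= beta - nu.
    by move=> s /(_ v Vv); rewrite ev eb /= lerBrDr.
  have hs : has_sup F by split; [exists s0 | exists (beta - nu) => s /ub].
  exists (Some (sup F)); split.
  - case ea: (a k) => [al|] //=; apply: sup_upper_bound => //.
    by move=> w Vw; move: (hak w Vw); rewrite ea.
  - apply/feasE => w Vw; case ew: (w k) => [om|] //.
    case eb2: (mdot b w) => [be|]; first last.
      by move: (Fs0 w Vw); rewrite ew eb2.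
    rewrite /= -lerBrDr; apply: ge_sup; first by exists s0.
    by move=> s /(_ w Vw); rewrite ew eb2 /= lerBrDr.
  - move=> [s|] // /feasE Fs /=; exact: sup_upper_bound.
exists None; split.
- case ea: (a k) => [al|] //=; apply: nF; exists al.
  by move=> w Vw; move: (hak w Vw); rewrite ea.
- by apply/feasE => w Vw.
- by move=> [s|] // /feasE Fs; exfalso; apply: nF; exists s.
Qed.


Lemma step_b a b j : feas a b ->
  exists t, [/\ mle t (b j), feas a (upd b j t) & forall t', feas a (upd b j t') -> mle t t'].
Proof.
move=> hf.
set r := fun v => mdot (upd b j None) v.
have feasE : forall t, feas a (upd b j t) <->
   forall v, V v -> mle (mdot a v) (madd (mmul t (v j)) (r v)).
  by move=> t; split => h v Vv; move: (h v Vv); rewrite /halfspace mdot_upd.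
have Gb : forall v, V v -> mle (mdot a v) (madd (mmul (b j) (v j)) (r v)).
  apply/feasE; have -> : upd b j (b j) = b.
    by apply: funext => i; rewrite /upd; case: eqP => [->|].
  exact: hf.
have hNone : forall v, V v -> v j = None -> mle (mdot a v) (r v).
  by move=> v Vv ev; move: (Gb v Vv); rewrite ev mmulN.
case: (pselect (feas a (upd b j None))) => [hN|hN].
  by exists None; split.
set L := fun s : R => exists v, [/\ V v, ~ mle (mdot a v) (r v) &
   exists ze nu, [/\ mdot a v = Some ze, v j = Some nu & s = ze - nu]].
have LE : forall tau, feas a (upd b j (Some tau)) <-> ubound L tau.
  move=> tau; rewrite feasE; split.
    move=> h s [v [Vv nle [ze [nu [ea ev ->]]]]].
    move: (h v Vv); rewrite ev ea.
    case: (madd_cases (mmul (Some tau) (Some nu)) (r v)) => ->; last by rewrite -ea.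
    by rewrite /= lerBlDr.
  move=> ub v Vv; case ea: (mdot a v) => [ze|] //.
  case: (pselect (mle (Some ze) (r v))) => [h|h].
    exact: mle_trans h (madd_ge_r _ _).
  case ev: (v j) => [nu|]; last first.
    by exfalso; apply: h; rewrite -ea; apply: hNone.
  apply: mle_trans (madd_ge_l _ _) => /=; rewrite -lerBlDr; apply: ub.
  by exists v; split => //; [rewrite ea | exists ze, nu].
have [v0 [Vv0 nv0]] : exists v, V v /\ ~ mle (mdot a v) (r v).
  apply: contrapT => hc; apply: hN; apply/feasE => v Vv.
  rewrite /=; apply: contrapT => hn; apply: hc; exists v; split => //.
case ea0: (mdot a v0) nv0 => [ze0|] nv0; last by exfalso; apply: nv0.
case ev0: (v0 j) => [nu0|]; last first.
  by exfalso; apply: nv0; rewrite -ea0; apply: hNone.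
have L0 : L (ze0 - nu0).
  by exists v0; split => //; [rewrite ea0 | exists ze0, nu0].
case ebj: (b j) => [be|]; last first.
  exfalso; apply: hN; rewrite -ebj.
  have -> : upd b j (b j) = b.
    by apply: funext => i; rewrite /upd; case: eqP => [->|].
  exact: hf.
have hs : has_sup L.
  split; first by exists (ze0 - nu0).
  exists be; apply/LE; rewrite -ebj.
  have -> : upd b j (b j) = b.
    by apply: funext => i; rewrite /upd; case: eqP => [->|].
  exact: hf.
exists (Some (sup L)); split.
- rewrite /=; apply: ge_sup; first by exists (ze0 - nu0).
  apply/LE; rewrite -ebj.
  have -> : upd b j (b j) = b.
    by apply: funext => i; rewrite /upd; case: eqP => [->|].
  exact: hf.
- by apply/LE; apply: sup_upper_bound.
- move=> [tau|] ht; last by exfalso; apply: hN.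
  rewrite /=; apply: ge_sup; first by exists (ze0 - nu0).
  exact/LE.
Qed.

End Four.

Section Five.
Variable R : realType.
Variable n : nat.
Implicit Types a b c d f g : mvec R n.

Definition e2 (i : 'I_n) (T : R) (j : 'I_n) (S : R) : mvec R n :=
  fun m => if m == i then Some T else if m == j then Some S else None.

Lemma mdot_e1 f k T : mdot f (e2 k T k T) = mmul (f k) (Some T).
Proof.
apply: le_eq => z; rewrite mdot_le; split; first by move/(_ k); rewrite /e2 eqxx.
move=> h m; rewrite /e2; case: ifP => [/eqP ->|_] //; case: ifP => [/eqP ->|_] //.
by rewrite mmulN.
Qed.

Lemma mdot_e2 f i j T S : i != j ->
  mdot f (e2 i T j S) = madd (mmul (f i) (Some T)) (mmul (f j) (Some S)).
Proof.
move=> ne; apply: le_eq => z; rewrite mdot_le mle_madd; split.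
  move=> h; split; first by move: (h i); rewrite /e2 eqxx.
  by move: (h j); rewrite /e2 eq_sym (negbTE ne) eqxx.
move=> [h1 h2] m; rewrite /e2; case: ifP => [/eqP ->|_] //; case: ifP => [/eqP ->|_] //.
by rewrite mmulN.
Qed.

Lemma key a b c d i0 : (forall k, a k = None \/ b k = None) ->
  (forall k, c k = None \/ d k = None) -> a i0 <> None ->
  (forall x, halfspace c d x -> halfspace a b x) ->
  exists l : R, forall k, mle (a k) (mmul (Some l) (c k)) /\ mle (mmul (Some l) (d k)) (b k).
Proof.
move=> dab dcd ai0 hsub.
have H1 : forall k al, a k = Some al -> exists ga, c k = Some ga.
  move=> k al ea; case ec: (c k) => [ga|]; first by exists ga.
  have := hsub (e2 k 0 k 0); rewrite /halfspace !mdot_e1 ec ea /=.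
  case: (dab k) => e; first by rewrite e in ea.
  by rewrite e => /(_ I).
have H3 : forall i j al ga de be, a i = Some al -> c i = Some ga ->
    d j = Some de -> b j = Some be -> al - ga <= be - de.
  move=> i j al ga de be ea ec ed eb.
  have ne : i != j.
    apply/eqP => e; rewrite e in ec; case: (dcd j) => h; first by rewrite h in ec.
    by rewrite h in ed.
  have dI : d i = None by case: (dcd i) => // h; rewrite h in ec.
  have bI : b i = None by case: (dab i) => // h; rewrite h in ea.
  have cJ : c j = None by case: (dcd j) => // h; rewrite h in ed.
  have := hsub (e2 i (- ga) j (- de)); rewrite /halfspace !mdot_e2 //.
  rewrite ec cJ dI ed ea eb bI /=.
  move=> /(_ _); rewrite !subrr lexx => /(_ isT).
  case: (a j) => [aj|] /=; last by [].
  by rewrite ge_max => /andP[].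
have H2 : forall k de, d k = Some de -> exists be, b k = Some be.
  move=> k de ed; case eb: (b k) => [be|]; first by exists be.
  case ea0: (a i0) ai0 => [al0|] // _.
  have [ga0 ec0] := H1 _ _ ea0.
  have ne : i0 != k.
    apply/eqP => e; rewrite e in ec0; case: (dcd k) => h; first by rewrite h in ec0.
    by rewrite h in ed.
  have dI : d i0 = None by case: (dcd i0) => // h; rewrite h in ec0.
  have bI : b i0 = None by case: (dab i0) => // h; rewrite h in ea0.
  have cK : c k = None by case: (dcd k) => // h; rewrite h in ed.
  have := hsub (e2 i0 (- ga0) k (- de)); rewrite /halfspace !mdot_e2 //.
  rewrite ec0 cK dI ed ea0 eb bI /= !subrr lexx => /(_ isT).
  by case: (a k).
(* maximize al - ga *)
set w : mvec R n := fun i => match a i, c i with Some al, Some ga => Some (al - ga) | _, _ => None end.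
set z0 : mvec R n := fun _ => Some 0.
have wle : forall i, mle (mmul (w i) (Some 0)) (mdot w z0) := fun i => mdot_ge w z0 i.
have [m [lam [em wm]]] : exists m lam, mdot w z0 = Some (lam + 0) /\ w m = Some lam.
  case: (mdot_arg w z0) => [E|[m E]].
    move: (wle i0); rewrite E /w.
    case ea0: (a i0) ai0 => [al0|] // _; have [ga0 ->] := H1 _ _ ea0; by [].
  case ewm: (w m) E => [lam|] E.
    by exists m, lam; rewrite E.
  move: (wle i0); rewrite E /z0 /= /w.
  case ea0: (a i0) ai0 => [al0|] // _; have [ga0 ->] := H1 _ _ ea0; by [].
move: wm; rewrite /w; case eam: (a m) => [alm|] //; case ecm: (c m) => [gam|] // [elam].
exists lam => k; split.
  case eak: (a k) => [al|] //; have [ga ec] := H1 _ _ eak.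
  move: (wle k); rewrite em /w eak ec /= !addr0 -elam => h.
  by rewrite -lerBlDr.
case edk: (d k) => [de|] //=; have [be eb] := H2 _ _ edk; rewrite eb /=.
rewrite -lerBrDr -elam; exact: H3 eam ecm edk eb.
Qed.

End Five.

Theorem theorem3p5 (R : realType) (n : nat) (V : mvec R n -> Prop)
  (hcone : mp_cone V) (hsupp : full_support V) (a b : mvec R n)
  (hVH : msubset V (halfspace a b)) :
  exists a' b' : mvec R n,
    [/\ msubset V (halfspace a' b'),
        msubset (halfspace a' b') (halfspace a b) &
        forall a'' b'' : mvec R n,
          msubset V (halfspace a'' b'') ->
          msubset (halfspace a'' b'') (halfspace a' b') ->
          msubset (halfspace a' b') (halfspace a'' b'')].
Proof.
case: (pselect (exists a1 b1, [/\ feas V a1 b1, msubset (halfspace a1 b1) (halfspace a b)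
   & exists x, ~ halfspace a1 b1 x])) => [[a1 [b1 [f1 s1 [x1 nx1]]]]|nP]; last first.
  exists a, b; split => //.
  move=> a'' b'' hV hs x _; apply: contrapT => hx; apply: nP; exists a'', b''.
  by split => //; exists x.
set a0 := nA a1 b1; set b0 := nB a1 b1.
have f0 : feas V a0 b0 by move=> v Vv; apply/norm_hs; exact: f1.
have [b2 [hb2 _ f2 E1]] := @iterate R n (fun f => feas V a0 f) (@mle R) (fun _ => True)
  (@mle_refl R) (@mle_trans R)
  (fun f g hgf hg v Vv => hs_mono (fun i => mle_refl (a0 i)) hgf (hg v Vv))
  (fun f j _ hf => step_b j hf) b0 f0.
have [a3 [ha3 ha32 f3 E2]] := @iterate R n (fun f => feas V f b2) (fun x y => mle y x)
  (fun k => b2 k = None) (@mle_refl R) (fun p q r h1 h2 => mle_trans h2 h1)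
  (fun f g hgf hg v Vv => hs_mono hgf (fun i => mle_refl (b2 i)) (hg v Vv))
  (fun f j _ hf => step_a hsupp j hf) a0 f2.
have E1' : forall j t', feas V a3 (upd b2 j t') -> mle (b2 j) t'.
  move=> j t' h; apply: E1 => // v Vv; apply: hs_mono (h v Vv) => // i.
  exact: mle_refl.
have disj : forall k, a3 k = None \/ b2 k = None.
  move=> k; case eb: (b2 k) => [be|]; last by right.
  left; rewrite ha32; last by rewrite eb.
  case: (nAB_disj a1 b1 k) => // h; exfalso.
  by move: (hb2 k); rewrite eb /b0 h.
have sub31 : forall x, halfspace a3 b2 x -> halfspace a1 b1 x.
  move=> x h; apply/norm_hs; apply: hs_mono h => //.
have [i0 ai0] : exists i0, a3 i0 <> None.
  apply: contrapT => hn; apply: nx1; apply: sub31; rewrite /halfspace mdot_le => i.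
  have -> : a3 i = None by apply: contrapT => h; apply: hn; exists i.
  by [].
exists a3, b2; split.
- exact: f3.
- by move=> x /sub31 /s1.
move=> a'' b'' hV hs.
set c := nA a'' b''; set d := nB a'' b''.
have hcd : forall x, halfspace c d x -> halfspace a3 b2 x.
  by move=> x /norm_hs; exact: hs.
have [l hl] := key disj (nAB_disj a'' b'') ai0 hcd.
set c' := sc l c; set d' := sc l d.
have A1 : forall k, mle (a3 k) (c' k) := fun k => (hl k).1.
have A2 : forall k, mle (d' k) (b2 k) := fun k => (hl k).2.
have hV' : forall v, V v -> halfspace c' d' v.
  by move=> v Vv; apply/hs_sc; apply/norm_hs; exact: hV.
have chain : forall v, V v -> mle (mdot a3 v) (mdot d' v).
  by move=> v Vv; apply: mle_trans (mdot_monol v A1) (hV' v Vv).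
have B1 : forall j, mle (b2 j) (d' j).
  move=> j; apply: E1' => v Vv; apply: mle_trans (chain v Vv) _.
  apply: mdot_monol => i; rewrite /upd; case: ifP => [/eqP ->|_]; [exact: mle_refl | exact: A2].
have B2 : forall k, mle (c' k) (a3 k).
  move=> k; case ec: (c' k) => [ga|] //.
  have ck : c k <> None by move=> h; move: ec; rewrite /c' /sc h.
  have dk : d' k = None.
    rewrite /d' /sc /d; case: (nAB_disj a'' b'' k) => [h|->] //; by exfalso; apply: ck.
  have bk : b2 k = None.
    apply: mleN; apply: E1' => v Vv; apply: mle_trans (chain v Vv) _.
    apply: mdot_monol => i; rewrite /upd; case: ifP => [/eqP ->|_]; [rewrite dk // | exact: A2].
  apply: (E2 k bk (Some ga)) => v Vv; apply/hs_upd_a; split.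
    have := mdot_ge c' v k; rewrite ec => h; apply: mle_trans h _.
    apply: mle_trans (hV' v Vv) _; exact: mdot_monol A2.
  by move=> i _; apply: mle_trans (mdot_ge a3 v i) (f3 v Vv).
move=> x hx; apply/norm_hs; apply/(hs_sc l); rewrite /halfspace mdot_le => k.
apply: mle_trans (mmul_monol (x k) (B2 k)) _.
apply: mle_trans (mdot_ge a3 x k) _; apply: mle_trans hx _; exact: mdot_monol.
Qed.
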